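(* Let $(V,g)$ be a Euclidean vector space of dimension $n\ge3$, $N=\frac{(n-1)(n+2)}{2}$. (1) If $1\le\alpha_1\le\alpha_2<N$ and $\theta>-1$, then $\mathcal{C}(\alpha_1,\theta)\subset\mathcal{C}(\alpha_2,\theta)$. (2) If $\alpha\in[1,N)$ and $-1<\theta_1\le\theta_2$, then $\mathcal{C}(\alpha,\theta_1)\subset\mathcal{C}(\alpha,\theta_2)$.
   Context: $S^2_0(V)$ is the space of traceless symmetric two-tensors on $V$ (dimension $N$). For a symmetric operator on $S^2_0(V)$ with eigenvalues $\lambda_1\le\cdots\le\lambda_N$ and average $\bar\lambda$, write $\lambda_1+\cdots+\lambda_\alpha:=\lambda_1+\cdots+\lambda_{[\alpha]}+(\alpha-[\alpha])\lambda_{[\alpha]+1}$; $\mathcal{C}(\alpha,\theta)$ is the cone of symmetric operators on $S^2_0(V)$ with $\alpha^{-1}(\lambda_1+\cdots+\lambda_\alpha)\ge-\theta\bar\lambda$. (In the paper these cones are considered for operators $\mathring{R}$ induced by algebraic curvature tensors.) *)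

(* Defs.v *)
From HB Require Import structures.
From mathcomp Require Import all_boot all_order all_algebra.
From mathcomp Require Import all_classical all_reals.
Set Implicit Arguments. Unset Strict Implicit. Unset Printing Implicit Defensive.
Import Order.TTheory GRing.Theory Num.Theory.
Local Open Scope ring_scope.

(* N = (n-1)(n+2)/2 = dim S^2_0(V) for dim V = n. *)
Definition dimS20 (n : nat) : nat := ((n.-1 * (n + 2))./2)%N.

Definition sorted_eigenvalues (R : realType) (N : nat) (A : 'M[R]_N)
    (lam : seq R) : Prop :=
  [/\ size lam = N, sorted <=%R lam &
      exists P : 'M[R]_N, P *m P^T = 1%:M /\
        A = P^T *m diag_mx (\row_(i < N) lam`_i) *m P].

(* lambda_1 + ... + lambda_alpha := lambda_1 + ... + lambda_[alpha]
   + (alpha - [alpha]) lambda_{[alpha]+1}   (1-based in the paper,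
   0-based indices here). *)
Definition frac_partial_sum (R : realType) (lam : seq R) (alpha : R) : R :=
  let k := Num.truncn alpha in
  \sum_(i < k) lam`_i + (alpha - k%:R) * lam`_k.

Definition mean_eig (R : realType) (lam : seq R) : R :=
  (\sum_(x <- lam) x) / (size lam)%:R.

(* The cone C(alpha, theta) of symmetric operators on S^2_0(V), written in an
   orthonormal basis of S^2_0(V) (so symmetric operators = symmetric matrices). *)
Definition cone (R : realType) (N : nat) (alpha theta : R) (A : 'M[R]_N)
    : Prop :=
  A^T = A /\
  exists lam : seq R, sorted_eigenvalues A lam /\
    alpha^-1 * frac_partial_sum lam alpha >= - theta * mean_eig lam.

(* Main.v *)
Require Import Defs.
From HB Require Import structures.
From mathcomp Require Import all_boot all_order all_algebra.
From mathcomp Require Import all_classical all_reals.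
From mathcomp Require Import lra.
Import Order.TTheory GRing.Theory Num.Theory.
Local Open Scope ring_scope.


Lemma mono {R : realType} {lam : seq R} (srt : sorted <=%R lam) i j : (i <= j)%N -> (j < size lam)%N -> lam`_i <= lam`_j.
Proof.
move=> ij jN.
apply: (sorted_leq_nth le_trans (@lexx _ _) 0 srt) => //.
rewrite inE; exact: leq_ltn_trans ij jN.
Qed.

Lemma sum_lb {R : realType} {lam : seq R} (srt : sorted <=%R lam) k1 k2 : (k1 <= k2)%N -> (k2 <= size lam)%N ->
  \sum_(i < k1) lam`_i + (k2 - k1)%:R * lam`_k1 <= \sum_(i < k2) lam`_i.
Proof.
move=> le12 k2N.
rewrite -!(big_mkord xpredT (fun i => lam`_i)) (big_cat_nat (leq0n k1) le12) /=.
rewrite lerD2l mulr_natl -sumr_const_nat.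
apply: ler_sum_nat => i /andP[h1 h2]; apply: (mono srt) => //.
exact: leq_trans h2 k2N.
Qed.
Lemma key {R : realType} {lam : seq R} (srt : sorted <=%R lam) a1 a2 : 0 < a1 -> a1 <= a2 -> a1 < (size lam)%:R -> a2 <= (size lam)%:R ->
  frac_partial_sum lam a1 / a1 <= frac_partial_sum lam a2 / a2.
Proof.
move=> a1p a12 a1N a2N.
have a2p : 0 < a2 by apply: lt_le_trans a12.
rewrite /frac_partial_sum.
set k1 := Num.truncn a1; set k2 := Num.truncn a2.
have k1a : k1%:R <= a1 by rewrite truncn_le ltW.
have k2a : k2%:R <= a2 by rewrite truncn_le ltW.
have k1N : (k1 < size lam)%N by rewrite truncn_lt_nat // ltW.
have k12 : (k1 <= k2)%N by apply: le_truncn.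
have k2N : (k2 <= size lam)%N by rewrite truncn_le_nat; apply: le_lt_trans a2N _; rewrite ltr_nat.
set L1 := lam`_k1.
set X1 := \sum_(i < k1) lam`_i.
set X2 := \sum_(i < k2) lam`_i.
have h1 : X1 + (k2%:R - k1%:R) * L1 <= X2 by rewrite -natrB //; apply: (sum_lb srt).
have h2 : (a2 - k2%:R) * L1 <= (a2 - k2%:R) * lam`_k2.
  move: k2N; rewrite leq_eqVlt => /orP[/eqP e|lt].
    have -> : a2 = k2%:R by apply/le_anti; rewrite k2a e a2N.
    by rewrite subrr !mul0r.
  by apply: ler_wpM2l; [rewrite subr_ge0 | apply: (mono srt)].
have h3 : X1 <= k1%:R * L1.
  rewrite /X1.
  have -> : k1%:R * L1 = \sum_(i < k1) L1 by rewrite sumr_const card_ord mulr_natl.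
  by apply: ler_sum => i _; apply: (mono srt) => //; apply: ltnW; apply: leq_trans (ltn_ord i) _.
set S1 := X1 + (a1 - k1%:R) * L1.
set S2 := X2 + (a2 - k2%:R) * lam`_k2.
have i1 : S1 + (a2 - a1) * L1 <= S2 by rewrite /S1 /S2; lra.
have i2 : S1 <= a1 * L1 by rewrite /S1; lra.
have j1 : a1 * (S1 + (a2 - a1) * L1) <= a1 * S2 by apply: ler_wpM2l => //; apply: ltW.
have j2 : (a2 - a1) * S1 <= (a2 - a1) * (a1 * L1) by apply: ler_wpM2l; rewrite ?subr_ge0.
have : a2 * S1 <= a1 * S2 by lra.
by rewrite ler_pdivrMr // mulrAC ler_pdivlMr // mulrC [a1 * _]mulrC.
Qed.
Lemma fullS {R : realType} {lam : seq R} : frac_partial_sum lam (size lam)%:R / (size lam)%:R = mean_eig lam.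
Proof.
rewrite /frac_partial_sum /mean_eig natrK subrr mul0r addr0.
by rewrite (big_nth 0) big_mkord.
Qed.

Theorem proposition2p8 (R : realType) (n : nat) (hn : (3 <= n)%N) :
  (forall (a1 a2 theta : R), 1 <= a1 -> a1 <= a2 -> a2 < (dimS20 n)%:R ->
     -1 < theta ->
     forall A : 'M[R]_(dimS20 n), cone a1 theta A -> cone a2 theta A) /\
  (forall (a t1 t2 : R), 1 <= a -> a < (dimS20 n)%:R ->
     -1 < t1 -> t1 <= t2 ->
     forall A : 'M[R]_(dimS20 n), cone a t1 A -> cone a t2 A).
Proof.
split.
  move=> a1 a2 th h1 h12 h2N _ A [sym [lam [[sz srt ex] ineq]]].
  split=> //; exists lam; split; first by split.
  have a1p : 0 < a1 by apply: lt_le_trans h1; rewrite ltr01.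
  apply: le_trans ineq _; rewrite mulrC [a2^-1 * _]mulrC.
  by apply: (key srt) => //; rewrite sz ?ltW //; apply: le_lt_trans h2N.
move=> a t1 t2 h1 hN ht1 ht12 A [sym [lam [[sz srt ex] ineq]]].
split=> //; exists lam; split; first by split.
have ap : 0 < a by apply: lt_le_trans h1; rewrite ltr01.
have hm : a^-1 * frac_partial_sum lam a <= mean_eig lam.
  rewrite -fullS // mulrC; apply: (key srt) => //; rewrite sz //; exact: ltW.
set m := mean_eig lam in ineq hm *.
set f := a^-1 * frac_partial_sum lam a in ineq hm *.
have m0 : 0 <= m.
  have : 0 <= (1 + t1) * m by nra.
  by rewrite pmulr_rge0 // -ltrBlDl sub0r.
apply: le_trans ineq; rewrite !mulNr lerN2; exact: ler_wpM2r.
Qed.
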